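(* For $P\ge2$ and all integers $n>2$, $\beta_P(n)=\prod_{p\le P}\beta_{(p)}(n)$, where \[ \beta_P(n)=\sum_{\substack{d,v\ge1:\ dv^2=n^2-4\\ p\mid v\Rightarrow p\le P}}\frac1v\prod_{p\le P}\Big(1-\frac{\chi_d(p)}{p}\Big)^{-1},\qquad \beta_{(p)}(n)=\sum_{b\ge0}\frac1{p^b}\Big(1-\frac1p\chi_{(n^2-4)p^{-2b}}(p)\Big)^{-1}I_{p^b}(n), \] with $p$ denoting primes.
   Context: Sums over $d$ run over positive non-square discriminants, i.e. positive integers $d$, not perfect squares, with $d\equiv0,1\pmod4$; $v$ runs over positive integers. For such $d$, $\chi_d:\mathbb{Z}\to\{0,\pm1\}$ is the completely multiplicative function with: for odd primes $p$, $\chi_d(p)=0$ if $p\mid d$, $1$ if $p\nmid d$ and $x^2\equiv d\pmod p$ is solvable, $-1$ if insolvable; $\chi_d(2)=1,-1,0$ according as $d\equiv1\pmod 8$, $d\equiv5\pmod8$, $d\equiv0\pmod4$; $\chi_d(-1)=1$. For a prime $p$, $b\in\mathbb{N}_0$ and $n\in\mathbb{Z}$: $I_{p^b}(n)=1$ if $n^2\equiv4\pmod{p^{2b}}$ and, in case $p=2$, additionally $(n^2-4)2^{-2b}\equiv0,1\pmod 4$; otherwise $I_{p^b}(n)=0$. (The term of $\beta_{(p)}(n)$ with $I_{p^b}(n)=0$ is $0$; when $I_{p^b}(n)=1$, $(n^2-4)p^{-2b}$ is a positive non-square discriminant.) *)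

(* Defs.v *)
From mathcomp Require Import all_boot all_order all_algebra.
Set Implicit Arguments. Unset Strict Implicit. Unset Printing Implicit Defensive.
Import Order.TTheory GRing.Theory Num.Theory.

Definition is_disc (d : nat) : bool :=
  [&& 0 < d, ~~ [exists x : 'I_d.+1, (x : nat) ^ 2 == d] & (d %% 4 \in [:: 0; 1])].

(* chi_d evaluated at a prime p (the only arguments used in the statement). *)
Definition chi (d p : nat) : int :=
  if p == 2 then
    (if (d %% 8 == 1)%N then 1 else if (d %% 8 == 5)%N then -1 else 0)%R
  else if (p %| d)%N then 0%R
  else if [exists x : 'I_p, ((x : nat) ^ 2 == d %[mod p])%N] then 1%R else (-1)%R.

Definition Iind (p b n : nat) : bool :=
  (n ^ 2 == 4 %[mod p ^ (2 * b)]) &&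
  ((p == 2) ==> (((n ^ 2 - 4) %/ 2 ^ (2 * b)) %% 4 \in [:: 0; 1])).

Local Open Scope ring_scope.

Definition efac (d p : nat) : rat := (1 - (chi d p)%:~R / p%:R)^-1.

(* beta_P(n): all d,v >= 1 with d v^2 = n^2 - 4 satisfy d, v < n^2 (for n > 2),
   so the range below captures the full (finite) sum. *)
Definition betaP (P n : nat) : rat :=
  \sum_(1 <= v < n ^ 2) \sum_(1 <= d < n ^ 2)
    if [&& d * v ^ 2 == n ^ 2 - 4, is_disc d & all (fun q => q <= P) (primes v)]%N
    then (v%:R)^-1 * \prod_(p < P.+1 | prime p) efac d p
    else 0.

(* beta_(p)(n): terms with I_{p^b}(n) = 1 need p^(2b) | n^2-4, forcing b < n^2;
   all other terms vanish, so the truncation is exact. *)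
Definition betaLoc (p n : nat) : rat :=
  \sum_(0 <= b < n ^ 2)
    if Iind p b n then ((p ^ b)%:R)^-1 * efac ((n ^ 2 - 4) %/ p ^ (2 * b)) p else 0.

(* Main.v *)
Require Import Defs.
From mathcomp Require Import all_boot all_order all_algebra all_fingroup all_solvable.
From mathcomp Require Import zify.
Import Order.TTheory GRing.Theory Num.Theory.

Lemma oddsq8 w : odd w -> w ^ 2 %% 8 = 1.
Proof.
move=> ow; rewrite -modnXm.
have : w %% 8 < 8 by rewrite ltn_mod.
have : odd (w %% 8) by rewrite odd_mod.
move: (w %% 8) => r.
by do 8 (case: r => [|r] //).
Qed.

Lemma chi_sq d w p : prime p -> ~~ (p %| w) -> chi (d * w ^ 2) p = chi d p.
Proof.
move=> pp pw; rewrite /chi; case: eqP => [p2|np2].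
  have ow : odd w by move: pw; rewrite p2 dvdn2 negbK.
  by rewrite -modnMmr oddsq8 // muln1.
rewrite Euclid_dvdM // Euclid_dvdX // (negbTE pw) /= orbF.
case: ifP => // pd.
have p0 : 0 < p by rewrite prime_gt0.
have cwp : coprime w p by rewrite coprime_sym prime_coprime.
have ex_eq : [exists x : 'I_p, (x : nat) ^ 2 == d * w ^ 2 %[mod p]] =
             [exists x : 'I_p, (x : nat) ^ 2 == d %[mod p]].
  apply/existsP/existsP => -[x /eqP Hx].
    have Hu : w * w ^ p.-2 = 1 %[mod p].
      rewrite -expnS prednK; last by move: (prime_gt1 pp); case: p {p0 pw cwp np2 pd Hx pp x}=> [|[|]].
      by rewrite -(totient_prime pp) Euler_exp_totient.
    exists (Ordinal (ltn_pmod (x * w ^ p.-2) p0)); apply/eqP => /=.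
    rewrite modnXm expnMn -modnMml Hx modnMml -mulnA -expnMn -modnMmr -modnXm Hu.
    by rewrite modnXm modnMmr muln1.
  exists (Ordinal (ltn_pmod (x * w) p0)); apply/eqP => /=.
  by rewrite modnXm expnMn -modnMml Hx modnMml.
by rewrite ex_eq.
Qed.
Definition smooth (P v : nat) := all (fun q => q <= P) (primes v).

Lemma prod_logn P v : 0 < v -> smooth P v ->
  v = \prod_(p < P.+1 | prime p) p ^ logn p v.
Proof.
move=> v0 sv.
have pn : [pred q | q < P.+1].-nat v.
  by rewrite /pnat v0 /=; apply: sub_all sv => q /= h; rewrite inE ltnS.
rewrite -{1}(part_pnat_id pn) (@widen_partn (maxn v P)) ?leq_maxl //.
rewrite -(big_mkord (fun p => prime p) (fun p => p ^ logn p v)) big_mkcond /=.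
rewrite [RHS]big_mkcond /= [RHS](big_nat_widen _ _ (maxn v P).+1) ?ltnS ?leq_maxr //.
rewrite [RHS]big_mkcond; apply: eq_bigr => p _; rewrite inE /=; case: ifP => // _; case: ifP => // np.
by rewrite lognE np.
Qed.

Lemma logn_prodp P q (r : seq 'I_P.+1) (e : 'I_P.+1 -> nat) : prime q ->
  logn q (\prod_(i <- r | prime i) (i : nat) ^ e i) = \sum_(i <- r | prime i) (q == i) * e i.
Proof.
move=> pq; elim: r => [|a r IH]; first by rewrite !big_nil logn1.
rewrite !big_cons; case: ifP => pa //.
have h1 : 0 < (a : nat) ^ e a by rewrite expn_gt0 prime_gt0.
have h2 : 0 < \prod_(j <- r | prime j) (j : nat) ^ e j.
  by apply: prodn_cond_gt0 => i pi; rewrite expn_gt0 prime_gt0.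
rewrite (lognM _ h1 h2) lognX logn_prime // mulnC eq_sym.
by congr addn.
Qed.

Lemma logn_prodI P q (e : 'I_P.+1 -> nat) : prime q ->
  logn q (\prod_(i : 'I_P.+1 | prime i) (i : nat) ^ e i) =
  if q <= P then e (inord q) else 0.
Proof.
move=> pq; rewrite logn_prodp //; case: leqP => qP.
  have qi : q = (inord q : 'I_P.+1) by rewrite inordK.
  rewrite (bigD1 (inord q)) /= -?qi // eqxx mul1n big1 ?addn0 // => i /andP[_ ni].
  by rewrite qi (inj_eq val_inj) eq_sym (negbTE ni).
rewrite big1 // => i _; suff -> : (q == i) = false by [].
by apply/negbTE; rewrite neq_ltn (leq_trans (ltn_ord i)) ?orbT.
Qed.

Lemma prodI_gt0 P (e : 'I_P.+1 -> nat) :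
  0 < \prod_(i : 'I_P.+1 | prime i) (i : nat) ^ e i.
Proof. by apply: prodn_cond_gt0 => i pi; rewrite expn_gt0 prime_gt0. Qed.

Lemma prodI_smooth P (e : 'I_P.+1 -> nat) :
  smooth P (\prod_(i : 'I_P.+1 | prime i) (i : nat) ^ e i).
Proof.
apply/allP => q; rewrite -logn_gt0; case: (boolP (prime q)) => pq.
  by rewrite logn_prodI //; case: ifP.
by rewrite lognE (negbTE pq).
Qed.

Lemma sq_dvd_iff P v N : 0 < v -> smooth P v ->
  (v ^ 2 %| N) = [forall p : 'I_P.+1, prime p ==> (p ^ (2 * logn p v) %| N)].
Proof.
move=> v0 sv; apply/idP/forallP => [H p|H].
  apply/implyP => pp; apply: dvdn_trans H.
  by rewrite mulnC expnM dvdn_exp2r // pfactor_dvdnn.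
have v20 : 0 < v ^ 2 by rewrite expn_gt0 v0.
apply/(dvdn_partP _ v20) => p; rewrite mem_primes => /and3P[pp _ pv].
rewrite p_part lognX.
have pP : p <= P.
  move/allP: sv => /(_ p); apply; rewrite mem_primes pp v0 /=.
  by move: pv; rewrite Euclid_dvdX // => /andP[].
have := H (inord p); rewrite inordK ?ltnS // pp /=.
done.
Qed.

Lemma nsq n y : 2 < n -> y ^ 2 != n ^ 2 - 4.
Proof.
move=> n2; apply/eqP => h.
have n9 : 4 <= n * n by nia.
have h' : y * y + 4 = n * n by move: h; rewrite !expnS !expn0 !muln1; lia.
have [yn|ny] := ltnP y n.
  have : (y + 1) * (y + 1) <= n * n by apply: leq_mul; lia.
  nia.
have : n * n <= y * y by apply: leq_mul.
lia.
Qed.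

Lemma disc_E n d v : 2 < n -> d * v ^ 2 = n ^ 2 - 4 -> is_disc d = (d %% 4 \in [:: 0; 1]).
Proof.
move=> n2 h; rewrite /is_disc.
have -> : 0 < d.
  case: d h => // h; have : n ^ 2 - 4 > 0 by rewrite !expnS expn0; nia.
  by rewrite -h.
suff -> : [exists x : 'I_d.+1, (x : nat) ^ 2 == d] = false by [].
apply/negbTE/existsP => -[x /eqP xd].
by move: (@nsq n (x * v) n2); rewrite expnMn xd h eqxx.
Qed.

Lemma mod4_sq d w : odd w -> (d * w ^ 2) %% 4 = d %% 4.
Proof.
move=> ow; rewrite -modnMmr -(@modn_dvdm 8 (w ^ 2) 4) // oddsq8 //.
by rewrite muln1.
Qed.

Lemma loc_div i v d0 : prime i -> 0 < v ->
  exists2 w, ~~ (i %| w) & (d0 * v ^ 2) %/ i ^ (2 * logn i v) = d0 * w ^ 2.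
Proof.
move=> ip v0; have [w cw vE] := pfactor_coprime ip v0.
exists w; first by rewrite -prime_coprime.
rewrite {1}vE expnMn mulnA -expnM mulnC (mulnC _ 2) mulKn // expn_gt0 prime_gt0 //.
Qed.

Local Open Scope ring_scope.

Definition gL (n p b : nat) : rat :=
  if Iind p b n then ((p ^ b)%:R)^-1 * efac ((n ^ 2 - 4) %/ p ^ (2 * b)) p else 0.

Definition Tv (P n v : nat) : rat :=
  \sum_(d < n ^ 2) if [&& d * v ^ 2 == n ^ 2 - 4, is_disc d & all (fun q => q <= P) (primes v)]%N
    then (v%:R)^-1 * \prod_(p < P.+1 | prime p) efac d p else 0.

Lemma prod_if0 (I : finType) (Q : pred I) (c : pred I) (a : I -> rat) :
  \prod_(i | Q i) (if c i then a i else 0) =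
  if [forall i, Q i ==> c i] then \prod_(i | Q i) a i else 0.
Proof.
case: ifP => [/forallP H|/negbT].
  by apply: eq_bigr => i Qi; move: (H i); rewrite Qi /= => ->.
rewrite negb_forall => /existsP[i]; rewrite negb_imply => /andP[Qi nci].
by rewrite (bigD1 i) //= (negbTE nci) mul0r.
Qed.

Lemma lemA P n v : (2 <= P)%N -> (2 < n)%N -> (0 < v)%N -> smooth P v ->
  Tv P n v = \prod_(i : 'I_P.+1 | prime i) gL n i (logn i v).
Proof.
move=> P2 n2 v0 sv.
have N0 : (0 < n ^ 2 - 4)%N by rewrite !expnS expn0; nia.
have NK : (n ^ 2 - 4 < n ^ 2)%N by rewrite !expnS expn0; nia.
case: (boolP (v ^ 2 %| n ^ 2 - 4)%N) => vd.
  set d0 := ((n ^ 2 - 4) %/ v ^ 2)%N.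
  have Hd0 : (d0 * v ^ 2 = n ^ 2 - 4)%N by rewrite divnK.
  have d0K : (d0 < n ^ 2)%N by apply: leq_ltn_trans (leq_div _ _) NK.
  have Hloc : forall i : 'I_P.+1, prime i ->
      gL n i (logn i v) = if (i == 2 :> nat) ==> is_disc d0 then
        ((i ^ logn i v)%:R)^-1 * efac d0 i else 0.
    move=> i ip; rewrite /gL /Iind eqn_mod_dvd; last by rewrite !expnS expn0; nia.
    have [w iw Hw] := @loc_div i v d0 ip v0; rewrite Hd0 in Hw.
    have -> : (i ^ (2 * logn i v) %| n ^ 2 - 4)%N.
      by apply: dvdn_trans vd; rewrite mulnC expnM dvdn_exp2r // pfactor_dvdnn.
    rewrite /= (@disc_E n d0 v n2 Hd0) Hw.
    rewrite /efac chi_sq //.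
    case: (boolP (i == 2 :> nat)) => //= /eqP i2.
    rewrite i2 in Hw iw *; rewrite Hw mod4_sq //.
    by move: iw; rewrite dvdn2 negbK.
  rewrite (eq_bigr _ Hloc) prod_if0.
  rewrite /Tv (bigD1 (Ordinal d0K)) //= [X in _ + X]big1 ?addr0; last first.
    move=> d dd; case: ifP => // /and3P[/eqP dv _ _].
    move: dd; suff -> : d = Ordinal d0K by rewrite eqxx.
    by apply: val_inj => /=; rewrite /d0 -dv mulnK // expn_gt0 v0.
  rewrite Hd0 eqxx (_ : all _ _ = true) // andbT.
  have -> : [forall i : 'I_P.+1, prime i ==> ((i == 2 :> nat) ==> is_disc d0)] = is_disc d0.
    apply/forallP/idP => [H|H i]; last by rewrite H !implybT.
    have := H (inord 2); rewrite inordK ?ltnS // eqxx /= implyTb; apply.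
  rewrite andTb; case: ifP => // _.
  rewrite big_split /=; congr (_ * _).
  by rewrite prodfV -natr_prod -prod_logn.
have := vd; rewrite (@sq_dvd_iff P v _ v0 sv) negb_forall => /existsP[i].
rewrite negb_imply => /andP[ip ind].
rewrite (bigD1 i) //=.
have -> : gL n i (logn i v) = 0.
  rewrite /gL /Iind eqn_mod_dvd; last by rewrite !expnS expn0; nia.
  by rewrite (negbTE ind).
rewrite mul0r /Tv big1 // => d _; case: ifP => // /and3P[/eqP dv _ _].
by move: vd; rewrite -dv dvdn_mull.
Qed.

Lemma Tv_nz P n v : (2 < n)%N -> Tv P n v != 0 -> (0 < v)%N && smooth P v.
Proof.
move=> n2; apply: contraR; rewrite negb_and => H.
rewrite /Tv big1 // => d _; case: ifP => // /and3P[/eqP dv _ sv].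
case/orP: H => [|/negP]; last by rewrite /smooth sv.
rewrite lt0n negbK => /eqP v0.
have N0 : (0 < n ^ 2 - 4)%N by rewrite !expnS expn0; nia.
by move: N0; rewrite -dv v0 exp0n // muln0.
Qed.

Lemma logn_lt p v : (0 < v)%N -> (logn p v < v.+1)%N.
Proof.
move=> v0; case: (boolP (prime p)) => pp; last by rewrite lognE (negbTE pp).
apply: (@leq_trans (p ^ logn p v).+1); last by rewrite ltnS dvdn_leq // pfactor_dvdnn.
by rewrite ltnS ltnW // ltn_expl // prime_gt1.
Qed.

Lemma sum1_ord (K : nat) (F : nat -> rat) : F 0%N = 0 ->
  \sum_(1 <= d < K) F d = \sum_(d < K) F d.
Proof.
move=> F0; rewrite -(big_mkord xpredT F); case: K => [|K]; first by rewrite !big_geq.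
by rewrite [RHS]big_ltn // F0 add0r.
Qed.

Theorem lemma4p1 (P n : nat) : (2 <= P)%N -> (2 < n)%N ->
  betaP P n = \prod_(p < P.+1 | prime p) betaLoc p n.
Proof.
move=> P2 n2.
have K0 : (0 < n ^ 2)%N by rewrite expn_gt0; case: n n2.
have N0 : (0 < n ^ 2 - 4)%N by rewrite !expnS expn0; nia.
have NK : (n ^ 2 - 4 < n ^ 2)%N by rewrite !expnS expn0; nia.
have E1 : betaP P n = \sum_(v < n ^ 2) Tv P n v.
  rewrite -(big_mkord xpredT (Tv P n)) [RHS](big_ltn K0).
  have -> : Tv P n 0 = 0.
    by apply/eqP; apply: contraT => /(@Tv_nz P n 0 n2) /andP[].
  rewrite add0r; apply: eq_bigr => v _.
  by rewrite /Tv sum1_ord //= mul0n (ltn_eqF N0).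
have E2 : \prod_(p < P.+1 | prime p) betaLoc p n =
          \prod_(p < P.+1 | prime p) \sum_(b < n ^ 2) gL n p b.
  by apply: eq_bigr => p _; rewrite /betaLoc big_mkord.
pose j0 : 'I_(n ^ 2) := Ordinal K0.
rewrite E1 E2 (big_distr_big_dep j0).
pose Pi := fun f : {ffun 'I_P.+1 -> 'I_(n ^ 2)} => \prod_(i : 'I_P.+1 | prime i) gL n i (f i).
pose mf := fun f : {ffun 'I_P.+1 -> 'I_(n ^ 2)} =>
  (\prod_(i : 'I_P.+1 | prime i) (i : nat) ^ (f i : nat))%N.
pose h := fun f => (insubd j0 (mf f) : 'I_(n ^ 2)).
pose h' := fun v : 'I_(n ^ 2) =>
  [ffun i : 'I_P.+1 => if prime i then (insubd j0 (logn i v) : 'I_(n ^ 2)) else j0].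
have hv : forall v : 'I_(n ^ 2), (0 < v)%N -> smooth P v ->
    Tv P n v = Pi (h' v) /\ h (h' v) = v.
  move=> v v0 sv.
  have hlog : forall i : 'I_P.+1, prime i -> (h' v i : nat) = logn i v.
    move=> i ip; rewrite ffunE ip val_insubd.
    by rewrite (leq_trans (@logn_lt i v v0)) // ltn_ord.
  split; first by rewrite lemA //; apply: eq_bigr => i ip; rewrite -hlog.
  apply: val_inj; rewrite /h val_insubd.
  have -> : mf (h' v) = v.
    rewrite /mf [RHS](@prod_logn P v v0 sv); apply: eq_bigr => i ip; by rewrite hlog.
  by rewrite ltn_ord.
have hfam : forall v, h' v \in pfamily j0 (fun i : 'I_P.+1 => prime i) (fun=> xpredT).
  move=> v; apply/pfamilyP; split => //.
  by apply/supportP => i; rewrite ffunE; case: ifP => // ip; rewrite unfold_in /= ip.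
have hf : forall f, f \in pfamily j0 (fun i : 'I_P.+1 => prime i) (fun=> xpredT) ->
    Pi f != 0 -> h' (h f) = f /\ Tv P n (h f) = Pi f.
  move=> f /pfamilyP[/supportP Hs _] Pn.
  have Hi : forall i : 'I_P.+1, prime i -> Iind i (f i) n.
    move=> i ip; apply: contraNT Pn => nI; rewrite /Pi (bigD1 i) //= /gL (negbTE nI) mul0r.
    by [].
  have Hd : forall i : 'I_P.+1, prime i -> (i ^ (2 * f i) %| n ^ 2 - 4)%N.
    move=> i ip; move: (Hi i ip); rewrite /Iind eqn_mod_dvd; first by case/andP.
    by rewrite !expnS expn0; nia.
  have m0 : (0 < mf f)%N by apply: prodI_gt0.
  have ms : smooth P (mf f) by apply: prodI_smooth.
  have hl : forall i : 'I_P.+1, prime i -> logn i (mf f) = f i.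
    by move=> i ip; rewrite /mf logn_prodI // -ltnS ltn_ord inord_val.
  have md : (mf f ^ 2 %| n ^ 2 - 4)%N.
    rewrite (@sq_dvd_iff P _ _ m0 ms); apply/forallP => i; apply/implyP => ip.
    by rewrite hl //; exact: Hd.
  have mK : (mf f < n ^ 2)%N.
    apply: leq_ltn_trans NK; apply: leq_trans (dvdn_leq N0 md).
    by rewrite expnS expn1 leq_pmulr.
  have hE : (h f : nat) = mf f by rewrite val_insubd mK.
  split.
    apply/ffunP => i; rewrite ffunE; case: ifP => ip.
      by apply: val_inj; rewrite val_insubd hE hl // ltn_ord.
    by rewrite Hs // unfold_in /= ip.
  rewrite hE lemA //; apply: eq_bigr => i ip; by rewrite hl.
rewrite (bigID (fun v : 'I_(n ^ 2) => Tv P n v != 0)) /= [X in _ + X]big1 ?addr0; last by move=> v /negPn/eqP.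
rewrite [RHS](bigID (fun f => Pi f != 0)) /= [X in _ + X]big1 ?addr0; last first.
  by move=> f /andP[_ /negPn/eqP].
rewrite (reindex_onto h h'); last first.
  by move=> v /(@Tv_nz P n v n2)/andP[v0 sv]; case: (hv v v0 sv).
apply: eq_big => f.
  apply/andP/andP => [[Tn /eqP hh]|[fp Pn]].
    split; first by rewrite -hh hfam.
    have /andP[v0 sv] := @Tv_nz P n _ n2 Tn.
    by rewrite -hh -(hv _ v0 sv).1.
  have [hh Th] := hf f fp Pn; by rewrite Th Pn hh eqxx.
move=> /andP[Tn /eqP hh]; have /andP[v0 sv] := @Tv_nz P n _ n2 Tn.
by rewrite (hv _ v0 sv).1 hh.
Qed.
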